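(* Consider any sequences evolved by Algorithm 1 and assume there is $\underline\lambda>0$ with $\lambda_k\ge\underline\lambda$ for all $k\ge1$. Let $d_0:=\|x^*-x^0\|$ and $\alpha:=\sqrt{\frac{\mu\underline\lambda}{1+\mu\underline\lambda}}\in(0,1)$. Then: (a) for all $k\ge1$, $h(y^k)-h(x^* )\le\frac{d_0^2}{2\underline\lambda}(1-\alpha)^{k-1}$ and $\max\{\|x^*-y^k\|,\|x^*-x^k\|\}\le\frac{d_0}{\sqrt{\mu\underline\lambda}}(1-\alpha)^{(k-1)/2}$; (b) for all $k\ge1$, $v^{k+1}\in\partial_{\varepsilon_{k+1}}f(y^{k+1})+\partial g(y^{k+1})$, $\|v^{k+1}\|\le\frac{\sqrt6\,\big(1+\sigma\sqrt{1+\mu\underline\lambda}\big)}{\mu^{1/2}\underline\lambda^{3/2}}\,d_0\,(1-\alpha)^{(k-1)/2}$, and $\varepsilon_{k+1}\le\frac{3\sigma^2d_0^2}{\mu\underline\lambda^2}(1-\alpha)^{k-1}$.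
   Context: Setting: $\mathcal H$ is a finite-dimensional real inner product space with inner product $\langle\cdot,\cdot\rangle$ and norm $\|\cdot\|$. $f,g:\mathcal H\to(-\infty,\infty]$ are proper, closed, convex functions, $h:=f+g$ has nonempty domain, and $g$ is $\mu$-strongly convex for some $\mu>0$, i.e. $g(tx+(1-t)y)\le tg(x)+(1-t)g(y)-\frac{\mu}{2}t(1-t)\|x-y\|^2$ for all $x,y\in\mathcal H$, $t\in[0,1]$. $x^*$ denotes the unique minimizer of $h$. For $\varepsilon\ge 0$, $\partial_\varepsilon f(y):=\{u\in\mathcal H: f(w)\ge f(y)+\langle u,w-y\rangle-\varepsilon\ \forall w\in\mathcal H\}$, and $\partial g:=\partial_0 g$. Algorithm 1: Choose $x^0,y^0\in\mathcal H$ and $\sigma\in[0,1]$, and set $A_0=0$. For $k=0,1,2,\dots$: choose $\lambda_{k+1}>0$, set $a_{k+1}=\frac{(1+2\mu A_k)\lambda_{k+1}+\sqrt{(1+2\mu A_k)^2\lambda_{k+1}^2+4(1+\mu A_k)A_k\lambda_{k+1}}}{2}$ and $\tilde x^k=\frac{a_{k+1}-\mu A_k\lambda_{k+1}}{A_k+a_{k+1}}x^k+\frac{A_k+\mu A_k\lambda_{k+1}}{A_k+a_{k+1}}y^k$; compute $(y^{k+1},v^{k+1},\varepsilon_{k+1})\in\mathcal H\times\mathcal H\times[0,\infty)$ such that $v^{k+1}\in\partial_{\varepsilon_{k+1}}f(y^{k+1})+\partial g(y^{k+1})$ and $\frac{\|\lambda_{k+1}v^{k+1}+y^{k+1}-\tilde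 x^k\|^2}{1+\lambda_{k+1}\mu}+2\lambda_{k+1}\varepsilon_{k+1}\le\sigma^2\|y^{k+1}-\tilde x^k\|^2$; then set $A_{k+1}=A_k+a_{k+1}$ and $x^{k+1}=\frac{1+\mu A_k}{1+\mu A_{k+1}}x^k+\frac{\mu a_{k+1}}{1+\mu A_{k+1}}y^{k+1}-\frac{a_{k+1}}{1+\mu A_{k+1}}v^{k+1}$. ''Sequences evolved by Algorithm 1'' means any sequences satisfying all these relations for every $k\ge 0$. *)

(* Defs.v *)
From HB Require Import structures.
From mathcomp Require Import all_boot all_order all_algebra.
From mathcomp Require Import all_classical all_reals all_analysis.
Import numFieldNormedType.Exports.
Set Implicit Arguments. Unset Strict Implicit. Unset Printing Implicit Defensive.
Import Order.TTheory GRing.Theory Num.Theory.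
Local Open Scope ring_scope.
Local Open Scope classical_set_scope.

Section Defs.
Variables (R : realType) (n : nat).
Notation H := 'rV[R]_n.

Definition inner (u v : H) : R := (u *m v^T) 0 0.
Definition hnorm (u : H) : R := Num.sqrt (inner u u).

Local Open Scope ereal_scope.

Definition proper_fun (f : H -> \bar R) : Prop :=
  (forall x, f x != -oo) /\ (exists x, f x < +oo).

Definition closed_fun (f : H -> \bar R) : Prop :=
  closed [set p : H * R | f p.1 <= p.2%:E].

Definition convex_fun (f : H -> \bar R) : Prop :=
  forall (x y : H) (t : R), (0 <= t <= 1)%R ->
    f (t *: x + (1 - t) *: y)%R <= t%:E * f x + (1 - t)%:E * f y.

Definition strongly_convex (mu : R) (g : H -> \bar R) : Prop :=
  forall (x y : H) (t : R), (0 <= t <= 1)%R ->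
    g (t *: x + (1 - t) *: y)%R <=
      t%:E * g x + (1 - t)%:E * g y
      - (mu / 2 * t * (1 - t) * hnorm (x - y) ^+ 2)%R%:E.

Definition dom (f : H -> \bar R) : set H := [set x | f x < +oo].

Definition eps_subdiff (eps : R) (f : H -> \bar R) (y : H) : set H :=
  [set u | f y < +oo /\
     forall w : H, f y + (inner u (w - y) - eps)%R%:E <= f w].

Definition subdiff (f : H -> \bar R) (y : H) : set H := eps_subdiff 0 f y.

Definition in_sum (A B : set H) (v : H) : Prop :=
  exists u1 u2, A u1 /\ B u2 /\ v = (u1 + u2)%R.

End Defs.

Local Open Scope ring_scope.

Definition algorithm1 (R : realType) (n : nat) (f g : 'rV[R]_n -> \bar R)
  (mu sigma : R) (x y xt v : nat -> 'rV[R]_n) (lam eps A a : nat -> R) : Prop :=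
  0 <= sigma <= 1 /\ A 0%N = 0 /\
  forall k : nat,
    0 < lam k.+1 /\
    a k.+1 = ((1 + 2 * mu * A k) * lam k.+1 +
              Num.sqrt ((1 + 2 * mu * A k) ^+ 2 * lam k.+1 ^+ 2
                        + 4 * (1 + mu * A k) * A k * lam k.+1)) / 2 /\
    xt k = ((a k.+1 - mu * A k * lam k.+1) / (A k + a k.+1)) *: x k
           + ((A k + mu * A k * lam k.+1) / (A k + a k.+1)) *: y k /\
    0 <= eps k.+1 /\
    in_sum (eps_subdiff (eps k.+1) f (y k.+1)) (subdiff g (y k.+1)) (v k.+1) /\
    hnorm (lam k.+1 *: v k.+1 + y k.+1 - xt k) ^+ 2 / (1 + lam k.+1 * mu)
      + 2 * lam k.+1 * eps k.+1 <= sigma ^+ 2 * hnorm (y k.+1 - xt k) ^+ 2 /\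
    A k.+1 = A k + a k.+1 /\
    x k.+1 = ((1 + mu * A k) / (1 + mu * A k.+1)) *: x k
             + ((mu * a k.+1) / (1 + mu * A k.+1)) *: y k.+1
             - (a k.+1 / (1 + mu * A k.+1)) *: v k.+1.

(* Main.v *)
Require Import Defs.
From HB Require Import structures.
From mathcomp Require Import all_boot all_order all_algebra.
From mathcomp Require Import all_classical all_reals all_analysis.
From mathcomp Require Import ring lra.
Import numFieldNormedType.Exports.
Import Order.TTheory GRing.Theory Num.Theory.
Local Open Scope ring_scope.
Set Implicit Arguments. Unset Strict Implicit. Unset Printing Implicit Defensive.



Section Inner.
Variables (R : realType) (n : nat).
Implicit Types (u w z : 'rV[R]_n) (c : R).

Lemma inner_sum u w : inner u w = \sum_j u 0 j * w 0 j.
Proof. by rewrite /inner !mxE; apply: eq_bigr => j _; rewrite mxE. Qed.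

Lemma inner_sym u w : inner u w = inner w u.
Proof. by rewrite !inner_sum; apply: eq_bigr => j _; rewrite mulrC. Qed.

Lemma innerDl u w z : inner (u + w) z = inner u z + inner w z.
Proof. by rewrite !inner_sum -big_split; apply: eq_bigr => j _; rewrite mxE mulrDl. Qed.

Lemma innerZl c u w : inner (c *: u) w = c * inner u w.
Proof. by rewrite !inner_sum mulr_sumr; apply: eq_bigr => j _; rewrite mxE mulrA. Qed.

Lemma innerNl u w : inner (- u) w = - inner u w.
Proof. by rewrite -scaleN1r innerZl mulN1r. Qed.

Lemma innerBl u w z : inner (u - w) z = inner u z - inner w z.
Proof. by rewrite innerDl innerNl. Qed.

Lemma innerDr u w z : inner z (u + w) = inner z u + inner z w.
Proof. by rewrite !(inner_sym z) innerDl. Qed.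
Lemma innerZr c u w : inner w (c *: u) = c * inner w u.
Proof. by rewrite !(inner_sym w) innerZl. Qed.
Lemma innerNr u w : inner w (- u) = - inner w u.
Proof. by rewrite !(inner_sym w) innerNl. Qed.
Lemma innerBr u w z : inner z (u - w) = inner z u - inner z w.
Proof. by rewrite !(inner_sym z) innerBl. Qed.

Lemma inner_ge0 u : 0 <= inner u u.
Proof. by rewrite inner_sum; apply: sumr_ge0 => j _; rewrite -expr2 sqr_ge0. Qed.

Lemma hnorm_ge0 u : 0 <= hnorm u.
Proof. exact: sqrtr_ge0. Qed.

Lemma hnorm_sq u : hnorm u ^+ 2 = inner u u.
Proof. by rewrite /hnorm sqr_sqrtr // inner_ge0. Qed.

Lemma sq_le (x y : R) : 0 <= y -> x ^+ 2 <= y ^+ 2 -> x <= y.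
Proof. move=> y0 h; nra. Qed.

Lemma CS u w : inner u w <= hnorm u * hnorm w.
Proof.
have key : forall t, 0 <= inner u u - 2 * t * inner u w + t ^+ 2 * inner w w.
  move=> t; have := inner_ge0 (u - t *: w).
  rewrite !innerBl !innerBr !innerZl !innerZr (inner_sym w u); lra.
have hu := inner_ge0 u; have hw := inner_ge0 w.
have hsq : inner u w ^+ 2 <= inner u u * inner w w.
  have [w0|wpos] := eqVneq (inner w w) 0.
    have [uw0|uwn] := eqVneq (inner u w) 0.
      by rewrite uw0 w0; lra.
    have := key ((inner u u + 1) / (2 * inner u w)).
    have e : 2 * ((inner u u + 1) / (2 * inner u w)) * inner u w = inner u u + 1.
      by field; rewrite uwn.
    rewrite w0 mulr0 addr0 e; lra.
  have wp : 0 < inner w w by rewrite lt_def wpos hw.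
  have := key (inner u w / inner w w).
  have -> : inner u u - 2 * (inner u w / inner w w) * inner u w + (inner u w / inner w w) ^+ 2 * inner w w
     = inner u u - inner u w ^+ 2 / inner w w by field; rewrite gt_eqF.
  move=> h.
  have : inner u w ^+ 2 / inner w w * inner w w <= inner u u * inner w w.
    by apply: ler_wpM2r; lra.
  by rewrite divfK // gt_eqF.
have hn : (hnorm u * hnorm w) ^+ 2 = inner u u * inner w w by rewrite exprMn !hnorm_sq.
have hp : 0 <= hnorm u * hnorm w by rewrite mulr_ge0 // hnorm_ge0.
have [neg|pos] := ltP (inner u w) 0; first by lra.
apply: sq_le => //; by rewrite hn.
Qed.

Lemma hnorm_triangle u w : hnorm (u + w) <= hnorm u + hnorm w.
Proof.
apply: sq_le; first by rewrite addr_ge0 // hnorm_ge0.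
rewrite hnorm_sq innerDl !innerDr (inner_sym w u) sqrrD !hnorm_sq.
have := CS u w; lra.
Qed.

Lemma hnormZ c u : hnorm (c *: u) = `|c| * hnorm u.
Proof.
rewrite /hnorm innerZl innerZr mulrA -expr2 sqrtrM ?sqr_ge0 //.
by rewrite sqrtr_sqr.
Qed.

Lemma hnormB_sym u w : hnorm (u - w) = hnorm (w - u).
Proof. by rewrite -opprB -scaleN1r hnormZ normrN normr1 mul1r. Qed.

Lemma hnorm_le_sqrt u E : inner u u <= E -> hnorm u <= Num.sqrt E.
Proof. by move=> h; rewrite /hnorm ler_sqrt //; apply: le_trans h; apply: inner_ge0. Qed.

End Inner.



Section Conv.
Variables (R : realType) (n : nat).
Implicit Types (f g : 'rV[R]_n -> \bar R).

Lemma fin_proper f z : proper_fun f -> (f z < +oo)%E -> exists r, f z = r%:E.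
Proof.
case=> hn _; move: (hn z); case: (f z) => [r _ _|//|//]; by exists r.
Qed.

Lemma sup_lemma (c d : R) : 0 <= d -> (forall t, 0 < t < 1 -> (1 - t) * d <= c) -> d <= c.
Proof.
move=> d0 h; rewrite leNgt; apply/negP => cd.
have c0 : 0 <= c by have := h (1/2); lra.
have dp : 0 < d by lra.
have ht : 0 < (d - c) / (2 * d) < 1.
  apply/andP; split; first by apply: divr_gt0; lra.
  by rewrite ltr_pdivrMr; lra.
have := h _ ht.
have -> : (1 - (d - c) / (2 * d)) * d = (d + c) / 2 by field; lra.
lra.
Qed.

Lemma inner_comb (u w y : 'rV[R]_n) (t : R) :
  inner u (t *: w + (1 - t) *: y - y) = t * inner u (w - y).
Proof. rewrite !(innerDr, innerZr, innerNr); ring. Qed.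

Lemma sc_subgrad g mu (y u w : 'rV[R]_n) gy gw :
  strongly_convex mu g -> 0 <= mu -> subdiff g y u -> g y = gy%:E -> g w = gw%:E ->
  gy + inner u (w - y) + mu / 2 * hnorm (w - y) ^+ 2 <= gw.
Proof.
move=> sc mu0 [_ sub] ey ew.
suff : mu / 2 * hnorm (w - y) ^+ 2 <= gw - gy - inner u (w - y) by lra.
apply: sup_lemma; first by rewrite mulr_ge0 ?sqr_ge0 // divr_ge0.
move=> t /andP[t0 t1].
have h1 := sub (t *: w + (1 - t) *: y).
have h2 := sc w y t (ltac:(apply/andP; split; lra)).
have := le_trans h1 h2.
rewrite ey ew inner_comb subr0 -!EFinM -!EFinD lee_fin => h.
suff : t * ((1 - t) * (mu / 2 * hnorm (w - y) ^+ 2)) <= t * (gw - gy - inner u (w - y)).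
  by rewrite ler_pM2l.
lra.
Qed.

Lemma h_growth f g mu (xs y : 'rV[R]_n) fs gs fy gy :
  convex_fun f -> strongly_convex mu g -> 0 <= mu ->
  (forall z, (f xs + g xs <= f z + g z)%E) ->
  f xs = fs%:E -> g xs = gs%:E -> f y = fy%:E -> g y = gy%:E ->
  fs + gs + mu / 2 * hnorm (y - xs) ^+ 2 <= fy + gy.
Proof.
move=> cf sc mu0 hmin efs egs efy egy.
suff : mu / 2 * hnorm (y - xs) ^+ 2 <= fy + gy - (fs + gs) by lra.
apply: sup_lemma; first by rewrite mulr_ge0 ?sqr_ge0 // divr_ge0.
move=> t /andP[t0 t1].
have tt : 0 <= t <= 1 by apply/andP; split; lra.
have h1 := cf y xs t tt.
have h2 := sc y xs t tt.
have := le_trans (hmin (t *: y + (1 - t) *: xs)) (leeD h1 h2).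
rewrite efs egs efy egy -!EFinM -!EFinD lee_fin => h.
suff : t * ((1 - t) * (mu / 2 * hnorm (y - xs) ^+ 2)) <= t * (fy + gy - (fs + gs)).
  by rewrite ler_pM2l.
lra.
Qed.

End Conv.



Section Key.
Variables (R : realType) (n : nat).

Lemma key_id (xk yk y v xs : 'rV[R]_n) (A a lam mu : R) :
 0 <= A -> 0 < a -> 0 < mu ->
 lam = a ^+ 2 / (a * (1 + 2 * mu * A) + (1 + mu * A) * A) ->
 let A1 := A + a in
 let xt := ((a - mu * A * lam) / (A + a)) *: xk + ((A + mu * A * lam) / (A + a)) *: yk in
 let x1 := ((1 + mu * A) / (1 + mu * A1)) *: xk + ((mu * a) / (1 + mu * A1)) *: y
            - (a / (1 + mu * A1)) *: v in
 A * inner v (yk - y) + a * inner v (xs - y)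
 + mu / 2 * (A * inner (yk - y) (yk - y) + a * inner (xs - y) (xs - y))
 + (1 + mu * A) / 2 * inner (xk - xs) (xk - xs)
 - (1 + mu * A1) / 2 * inner (x1 - xs) (x1 - xs)
 - A1 * ((inner (y - xt) (y - xt)
          - inner (lam *: v + y - xt) (lam *: v + y - xt) / (1 + lam * mu)) / (2 * lam))
 = mu / 2 * (A * (a * (1 + mu * A) / (1 + mu * A1)) * (1 + lam * mu) / A1)
   * inner (yk - xk) (yk - xk).
Proof.
move=> A0 a0 mu0 hl A1 xt x1.
rewrite /x1 /xt /A1.
rewrite !(innerDl, innerDr, innerZl, innerZr, innerNl, innerNr).
rewrite ?(inner_sym yk xk) ?(inner_sym y xk) ?(inner_sym v xk) ?(inner_sym xs xk)
  ?(inner_sym y yk) ?(inner_sym v yk) ?(inner_sym xs yk) ?(inner_sym v y)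
  ?(inner_sym xs y) ?(inner_sym xs v).
set D := a * (1 + 2 * mu * A) + (1 + mu * A) * A.
have muA : 0 <= mu * A by rewrite mulr_ge0 //; lra.
have Dp : 0 < D.
  rewrite /D; apply: ltr_pwDl; first by apply: mulr_gt0 => //; lra.
  by apply: mulr_ge0 => //; lra.
rewrite hl.
field.
have p1 : 0 < A + a by lra.
have p3 : 0 < 1 + mu * (A + a) by nra.
have p5 : 0 < a * (1 + 2 * mu * A) + (1 + mu * A) * A + a ^+ 2 * mu.
  have : 0 < a ^+ 2 * mu by apply: mulr_gt0 => //; apply: exprn_gt0.
  rewrite -/D; lra.
by rewrite (gt_eqF p1) (gt_eqF Dp) (gt_eqF p3) (gt_eqF a0) (gt_eqF p5).
Qed.
End Key.

Section Step.
Variables (R : realType) (n : nat).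

Lemma a_props (A lam mu a : R) : 0 <= A -> 0 < lam -> 0 < mu ->
  a = ((1 + 2 * mu * A) * lam + Num.sqrt ((1 + 2 * mu * A) ^+ 2 * lam ^+ 2
        + 4 * (1 + mu * A) * A * lam)) / 2 ->
  [/\ 0 < a, (1 + 2 * mu * A) * lam <= a &
      a ^+ 2 = lam * (a * (1 + 2 * mu * A) + (1 + mu * A) * A)].
Proof.
move=> A0 l0 m0 ->.
set b := (1 + 2 * mu * A) * lam.
set c := (1 + mu * A) * A.
have muA : 0 <= mu * A by rewrite mulr_ge0 //; lra.
have b0 : 0 < b by rewrite /b; apply: mulr_gt0 => //; lra.
have c0 : 0 <= c by rewrite /c; apply: mulr_ge0 => //; lra.
have -> : (1 + 2 * mu * A) ^+ 2 * lam ^+ 2 + 4 * (1 + mu * A) * A * lam = b ^+ 2 + 4 * c * lam.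
  by rewrite /b /c; ring.
have hD : 0 <= b ^+ 2 + 4 * c * lam.
  have : 0 <= 4 * c * lam by apply: mulr_ge0; [apply: mulr_ge0 => //|lra].
  have := sqr_ge0 b; lra.
set S := Num.sqrt _.
have S0 : 0 <= S := sqrtr_ge0 _.
have S2 : S ^+ 2 = b ^+ 2 + 4 * c * lam by rewrite sqr_sqrtr.
have Sb : b <= S by apply: sq_le => //; rewrite S2; nra.
split; [lra | lra |].
have -> : lam * ((b + S) / 2 * (1 + 2 * mu * A) + c) = (b + S) / 2 * b + c * lam.
  by rewrite /b; ring.
have -> : c * lam = (S ^+ 2 - b ^+ 2) / 4 by rewrite S2; field.
by field.
Qed.

Lemma step (xk yk y v xs xt x1 : 'rV[R]_n) (A a lam mu sigma eps hk hy hs : R) :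
 0 <= A -> 0 < lam -> 0 < mu -> 0 <= sigma <= 1 -> 0 <= eps ->
 a = ((1 + 2 * mu * A) * lam + Num.sqrt ((1 + 2 * mu * A) ^+ 2 * lam ^+ 2
        + 4 * (1 + mu * A) * A * lam)) / 2 ->
 xt = ((a - mu * A * lam) / (A + a)) *: xk + ((A + mu * A * lam) / (A + a)) *: yk ->
 x1 = ((1 + mu * A) / (1 + mu * (A + a))) *: xk + ((mu * a) / (1 + mu * (A + a))) *: y
       - (a / (1 + mu * (A + a))) *: v ->
 hnorm (lam *: v + y - xt) ^+ 2 / (1 + lam * mu) + 2 * lam * eps
   <= sigma ^+ 2 * hnorm (y - xt) ^+ 2 ->
 hy + inner v (xs - y) - eps + mu / 2 * hnorm (xs - y) ^+ 2 <= hs ->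
 A * (hy + inner v (yk - y) - eps + mu / 2 * hnorm (yk - y) ^+ 2) <= A * hk ->
 (A + a) * (hy - hs) + (1 + mu * (A + a)) / 2 * hnorm (x1 - xs) ^+ 2
   <= A * (hk - hs) + (1 + mu * A) / 2 * hnorm (xk - xs) ^+ 2.
Proof.
move=> A0 l0 m0 /andP[s0 s1] e0 ha ext ex1 cond L1 L2.
have [a0 _ a2] := a_props A0 l0 m0 ha.
set D := a * (1 + 2 * mu * A) + (1 + mu * A) * A.
have muA : 0 <= mu * A by rewrite mulr_ge0 //; lra.
have Dp : 0 < D.
  rewrite /D; apply: ltr_pwDl; first by apply: mulr_gt0 => //; lra.
  by apply: mulr_ge0 => //; lra.
have hl : lam = a ^+ 2 / D by rewrite a2 mulfK // gt_eqF.
have K := key_id xk yk y v xs A0 a0 m0 hl.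
cbv zeta in K; rewrite -ext -ex1 in K.
rewrite !hnorm_sq in cond L1 L2 *.
set N2 := inner (y - xt) (y - xt) in cond K.
set Nr := inner (lam *: v + y - xt) (lam *: v + y - xt) in cond K.
have L0 : 0 < 1 + lam * mu by have := mulr_gt0 l0 m0; lra.
have Nr0 : 0 <= Nr / (1 + lam * mu) by rewrite divr_ge0 ?inner_ge0 //; lra.
have N20 : 0 <= N2 by apply: inner_ge0.
have hs2 : sigma ^+ 2 * N2 <= N2.
  have : sigma ^+ 2 <= 1 by rewrite expr2; nra.
  move=> h; have := ler_wpM2r N20 h; rewrite mul1r; done.
have eb : eps <= (N2 - Nr / (1 + lam * mu)) / (2 * lam).
  by rewrite ler_pdivlMr; [lra | apply: mulr_gt0 => //; lra].
set epsb := (N2 - Nr / (1 + lam * mu)) / (2 * lam) in eb K.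
have A1p : 0 < A + a by lra.
have hK : 0 <= mu / 2 * (A * (a * (1 + mu * A) / (1 + mu * (A + a))) * (1 + lam * mu) / (A + a))
             * inner (yk - xk) (yk - xk).
  apply: mulr_ge0; last by apply: inner_ge0.
  apply: mulr_ge0; first by apply: divr_ge0; lra.
  apply: divr_ge0; last by lra.
  apply: mulr_ge0; last by lra.
  apply: mulr_ge0 => //; apply: divr_ge0; last by nra.
  by apply: mulr_ge0; lra.
have L1a : a * (hy + inner v (xs - y) - eps + mu / 2 * inner (xs - y) (xs - y)) <= a * hs.
  by rewrite ler_pM2l.
have eb2 : (A + a) * eps <= (A + a) * epsb by rewrite ler_pM2l.
lra.
Qed.

End Step.



Section Misc.
Variables (R : realType) (n : nat).

Lemma alpha_bounds (mu lamb : R) : 0 < mu -> 0 < lamb ->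
  0 < Num.sqrt (mu * lamb / (1 + mu * lamb)) < 1.
Proof.
move=> m0 l0; have ml : 0 < mu * lamb by apply: mulr_gt0.
have t0 : 0 < mu * lamb / (1 + mu * lamb) by apply: divr_gt0 => //; lra.
have t1 : mu * lamb / (1 + mu * lamb) < 1.
  rewrite ltr_pdivrMr; lra.
apply/andP; split; first by rewrite sqrtr_gt0.
have : Num.sqrt (mu * lamb / (1 + mu * lamb)) < Num.sqrt 1 by rewrite ltr_sqrt //; lra.
by rewrite sqrtr1.
Qed.

Lemma growth (A a lam lamb mu : R) : 0 <= A -> 0 < lamb -> lamb <= lam -> 0 < mu ->
  a = ((1 + 2 * mu * A) * lam + Num.sqrt ((1 + 2 * mu * A) ^+ 2 * lam ^+ 2
        + 4 * (1 + mu * A) * A * lam)) / 2 ->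
  A <= (1 - Num.sqrt (mu * lamb / (1 + mu * lamb))) * (A + a).
Proof.
move=> A0 lb0 llb m0 ha.
have l0 : 0 < lam by lra.
have [a0 _ a2] := a_props A0 l0 m0 ha.
set al := Num.sqrt _.
have ml : 0 < mu * lamb by apply: mulr_gt0.
have al0 : 0 <= al := sqrtr_ge0 _.
have al2 : al ^+ 2 = mu * lamb / (1 + mu * lamb) by rewrite sqr_sqrtr // divr_ge0; lra.
have e1 : a ^+ 2 * (1 + lam * mu) = lam * (A + a) * (1 + mu * (A + a)).
  have -> : a ^+ 2 * (1 + lam * mu) = a ^+ 2 + a ^+ 2 * (lam * mu) by ring.
  rewrite {1}a2; ring.
have Ap : 0 < A + a by lra.
have h1 : lam * mu * (A + a) ^+ 2 <= a ^+ 2 * (1 + lam * mu).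
  rewrite e1; have : 0 <= lam * (A + a) by apply: mulr_ge0; lra.
  lra.
have h2 : mu * lamb * (1 + lam * mu) <= lam * mu * (1 + mu * lamb).
  have : mu * lamb * (lam * mu) = lam * mu * (mu * lamb) by ring.
  have : mu * lamb <= lam * mu by rewrite mulrC; apply: ler_wpM2r; lra.
  lra.
have L0 : 0 < 1 + lam * mu by have := mulr_gt0 l0 m0; lra.
have L1 : 0 < 1 + mu * lamb by lra.
have h3 : (al * (A + a)) ^+ 2 <= a ^+ 2.
  rewrite exprMn al2.
  have : mu * lamb / (1 + mu * lamb) <= lam * mu / (1 + lam * mu).
    by rewrite ler_pdivrMr // mulrAC ler_pdivlMr //.
  move=> h4.
  have : lam * mu / (1 + lam * mu) * (A + a) ^+ 2 <= a ^+ 2.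
    by rewrite mulrAC ler_pdivrMr.
  have : mu * lamb / (1 + mu * lamb) * (A + a) ^+ 2 <= lam * mu / (1 + lam * mu) * (A + a) ^+ 2.
    by apply: ler_wpM2r => //; apply: sqr_ge0.
  lra.
have : al * (A + a) <= a by apply: sq_le => //; lra.
lra.
Qed.

Lemma comb_sub (c1 c2 : R) (u w z : 'rV[R]_n) : c1 + c2 = 1 ->
  c1 *: u + c2 *: w - z = c1 *: (u - z) + c2 *: (w - z).
Proof.
move=> h; apply/rowP => j; rewrite !mxE.
have -> : c2 = 1 - c1 by lra.
ring.
Qed.

Lemma split_sub (u w z : 'rV[R]_n) : u - w = (u - z) + (z - w).
Proof. by apply/rowP => j; rewrite !mxE; ring. Qed.

Lemma hnormN (u : 'rV[R]_n) : hnorm (- u) = hnorm u.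
Proof. by rewrite -scaleN1r hnormZ normrN normr1 mul1r. Qed.

Lemma hnorm_triangleB (u w : 'rV[R]_n) : hnorm (u - w) <= hnorm u + hnorm w.
Proof. by rewrite -(hnormN w); apply: hnorm_triangle. Qed.

Lemma bound_conv (u : 'rV[R]_n) (d0 ml Q : R) : 0 <= d0 -> 0 < ml -> 0 <= Q ->
  inner u u * ml <= d0 ^+ 2 * Q -> hnorm u <= d0 / Num.sqrt ml * Num.sqrt Q.
Proof.
move=> d00 ml0 Q0 h.
have s0 : 0 < Num.sqrt ml by rewrite sqrtr_gt0.
apply: sq_le.
  by apply: mulr_ge0; [apply: divr_ge0 => //; lra | apply: sqrtr_ge0].
rewrite hnorm_sq exprMn expr_div_n !sqr_sqrtr //; last by lra.
by rewrite mulrAC ler_pdivlMr.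
Qed.

End Misc.



Section Fin.
Variables (R : realType) (n : nat).
Implicit Types (f g : 'rV[R]_n -> \bar R).

Lemma fin_sum f g z : proper_fun f -> proper_fun g -> (f z + g z < +oo)%E ->
  f z = (fine (f z))%:E /\ g z = (fine (g z))%:E.
Proof.
case=> hf _ [hg _]; move: (hf z) (hg z).
by case: (f z) => [r||]; case: (g z) => [s||].
Qed.

Lemma fin_y f g eps (y v : 'rV[R]_n) : proper_fun f -> proper_fun g ->
  in_sum (eps_subdiff eps f y) (subdiff g y) v ->
  f y = (fine (f y))%:E /\ g y = (fine (g y))%:E.
Proof.
move=> pf pg [u1 [u2 [[hf1 _] [[hg1 _] _]]]].
split.
  by have [r ->] := fin_proper pf hf1.
by have [r ->] := fin_proper pg hg1.
Qed.

Lemma lowbound f g mu eps (y v w : 'rV[R]_n) fy gy fw gw :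
  strongly_convex mu g -> 0 <= mu ->
  in_sum (eps_subdiff eps f y) (subdiff g y) v ->
  f y = fy%:E -> g y = gy%:E -> f w = fw%:E -> g w = gw%:E ->
  fy + gy + inner v (w - y) - eps + mu / 2 * hnorm (w - y) ^+ 2 <= fw + gw.
Proof.
move=> sc mu0 [u1 [u2 [[_ hf] [hg ->]]]] efy egy efw egw.
have h1 := hf w; rewrite efy efw -EFinD lee_fin in h1.
have h2 := sc_subgrad sc mu0 hg egy egw.
rewrite innerDl; lra.
Qed.

End Fin.



Section Final.
Variable R : realType.

Lemma final_a (Ak lamb Q mu d0 Hk hs Nx Ny : R) :
  0 < Ak -> 0 < lamb -> 0 < Q -> 0 < mu -> lamb <= Q * Ak -> 0 <= Nx -> 0 <= Ny ->
  Ak * (Hk - hs) + (1 + mu * Ak) / 2 * Nx <= d0 ^+ 2 / 2 ->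
  hs + mu / 2 * Ny <= Hk ->
  [/\ Hk - hs <= d0 ^+ 2 / (2 * lamb) * Q,
      Ny * (mu * lamb) <= d0 ^+ 2 * Q &
      Nx * (mu * lamb) <= d0 ^+ 2 * Q].
Proof.
move=> A0 l0 Q0 m0 lQ Nx0 Ny0 hP hg.
have H0 : 0 <= Hk - hs.
  have : 0 <= mu / 2 * Ny by apply: mulr_ge0 => //; lra.
  lra.
have t1 : 0 <= (1 + mu * Ak) / 2 * Nx.
  by apply: mulr_ge0 => //; apply: divr_ge0 => //; have := mulr_gt0 m0 A0; lra.
have h1 : Ak * (Hk - hs) <= d0 ^+ 2 / 2 by lra.
have h2 : lamb * (Hk - hs) <= Q * Ak * (Hk - hs) by apply: ler_wpM2r.
have h3 : Q * (Ak * (Hk - hs)) <= Q * (d0 ^+ 2 / 2) by apply: ler_wpM2l => //; lra.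
have h4 : Ak * (mu / 2 * Ny) <= Ak * (Hk - hs) by apply: ler_wpM2l; lra.
have h5 : lamb * (mu * Ny) <= Q * Ak * (mu * Ny) by apply: ler_wpM2r => //; apply: mulr_ge0; lra.
have h6 : Q * (Ak * (mu * Ny)) <= Q * d0 ^+ 2 by apply: ler_wpM2l; lra.
have h7 : mu * Ak * Nx <= d0 ^+ 2.
  have : 0 <= Ak * (Hk - hs) by apply: mulr_ge0; lra.
  have : (1 + mu * Ak) / 2 * Nx = Nx / 2 + mu * Ak * Nx / 2 by field.
  lra.
have h8 : lamb * (mu * Nx) <= Q * Ak * (mu * Nx) by apply: ler_wpM2r => //; apply: mulr_ge0; lra.
have h9 : Q * (mu * Ak * Nx) <= Q * d0 ^+ 2 by apply: ler_wpM2l; lra.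
split.
- rewrite mulrC mulrA ler_pdivlMr; last by lra.
  lra.
- lra.
- lra.
Qed.

Lemma final_v (lam1 lamb sigma mu d0 Q hv N2 : R) :
  0 < lamb -> lamb <= lam1 -> 0 <= sigma -> 0 < mu -> 0 <= d0 -> 0 <= Q -> 0 <= hv ->
  lam1 * hv <= sigma * Num.sqrt (1 + lam1 * mu) * N2 + N2 ->
  N2 <= 2 * (d0 / Num.sqrt (mu * lamb) * Num.sqrt Q) ->
  hv <= Num.sqrt 6 * (1 + sigma * Num.sqrt (1 + mu * lamb))
         / (Num.sqrt mu * (lamb * Num.sqrt lamb)) * d0 * Num.sqrt Q.
Proof.
move=> l0 ll s0 m0 d00 Q0 hv0 hlv hN.
set D := d0 / Num.sqrt (mu * lamb) * Num.sqrt Q.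
have sm : 0 < Num.sqrt mu by rewrite sqrtr_gt0.
have sl : 0 < Num.sqrt lamb by rewrite sqrtr_gt0.
have D0 : 0 <= D by rewrite /D; apply: mulr_ge0; [apply: divr_ge0 => //; apply: sqrtr_ge0|apply: sqrtr_ge0].
set s1 := Num.sqrt (1 + lam1 * mu).
set s2 := Num.sqrt (1 + mu * lamb).
rewrite -/s1 in hlv; rewrite -/D in hN.
have s10 : 0 <= s1 := sqrtr_ge0 _.
have s20 : 0 <= s2 := sqrtr_ge0 _.
have l10 : 0 < lam1 by lra.
have hs12 : lamb * s1 <= lam1 * s2.
  apply: sq_le; first by apply: mulr_ge0; lra.
  rewrite !exprMn /s1 /s2 !sqr_sqrtr; [|nra|nra].
  have : lamb * lamb * lam1 <= lam1 * lam1 * lamb.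
    have : lamb * lamb * lam1 = lamb * (lamb * lam1) by ring.
    have : lam1 * lam1 * lamb = lam1 * (lamb * lam1) by ring.
    have : 0 <= lamb * lam1 by apply: mulr_ge0; lra.
    nra.
  have : lamb ^+ 2 <= lam1 ^+ 2 by rewrite !expr2; nra.
  nra.
have s6 : 2 <= Num.sqrt (6 : R).
  apply: sq_le; first by apply: sqrtr_ge0.
  by rewrite sqr_sqrtr; [rewrite expr2; lra | lra].
have h1 : lam1 * hv <= (1 + sigma * s1) * (2 * D).
  have : (1 + sigma * s1) * N2 <= (1 + sigma * s1) * (2 * D).
    apply: ler_wpM2l => //; have : 0 <= sigma * s1 by apply: mulr_ge0.
    lra.
  lra.
have h2 : lamb * (1 + sigma * s1) <= lam1 * (1 + sigma * s2).
  have : sigma * (lamb * s1) <= sigma * (lam1 * s2) by apply: ler_wpM2l.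
  lra.
have eRHS : Num.sqrt 6 * (1 + sigma * s2) / (Num.sqrt mu * (lamb * Num.sqrt lamb)) * d0 * Num.sqrt Q
   = Num.sqrt 6 * (1 + sigma * s2) * D / lamb.
  rewrite /D sqrtrM; last by lra.
  field; apply/and3P; split; rewrite gt_eqF //.
rewrite eRHS ler_pdivlMr //.
have h3 : lamb * (lam1 * hv) <= lamb * ((1 + sigma * s1) * (2 * D)) by apply: ler_wpM2l; lra.
have h4 : lamb * (1 + sigma * s1) * (2 * D) <= lam1 * (1 + sigma * s2) * (2 * D).
  by apply: ler_wpM2r => //; lra.
have h5 : (1 + sigma * s2) * D * 2 <= (1 + sigma * s2) * D * Num.sqrt 6.
  apply: ler_wpM2l => //; apply: mulr_ge0 => //.
  have : 0 <= sigma * s2 by apply: mulr_ge0.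
  lra.
suff : lam1 * (hv * lamb) <= lam1 * (Num.sqrt 6 * (1 + sigma * s2) * D).
  by rewrite ler_pM2l.
nra.
Qed.

Lemma final_eps (lam1 lamb sigma mu d0 Q eps N2 X : R) :
  0 < lamb -> lamb <= lam1 -> 0 < mu -> 0 <= d0 -> 0 <= Q -> 0 <= eps -> 0 <= X ->
  X + 2 * lam1 * eps <= sigma ^+ 2 * N2 ^+ 2 ->
  0 <= N2 -> N2 <= 2 * (d0 / Num.sqrt (mu * lamb) * Num.sqrt Q) ->
  eps <= 3 * sigma ^+ 2 * d0 ^+ 2 / (mu * lamb ^+ 2) * Q.
Proof.
move=> l0 ll m0 d00 Q0 e0 X0 hc N20 hN.
have ml : 0 < mu * lamb by apply: mulr_gt0.
have hN2 : N2 ^+ 2 <= 4 * (d0 ^+ 2 * Q / (mu * lamb)).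
  have : N2 ^+ 2 <= (2 * (d0 / Num.sqrt (mu * lamb) * Num.sqrt Q)) ^+ 2.
    by rewrite ler_sqr // ?nnegrE //; lra.
  have sQ : Num.sqrt Q ^+ 2 = Q by rewrite sqr_sqrtr.
  have sM : Num.sqrt (mu * lamb) ^+ 2 = mu * lamb by rewrite sqr_sqrtr //; lra.
  have sMp : 0 < Num.sqrt (mu * lamb) by rewrite sqrtr_gt0.
  have -> : (2 * (d0 / Num.sqrt (mu * lamb) * Num.sqrt Q)) ^+ 2
     = 4 * (d0 ^+ 2 * Num.sqrt Q ^+ 2 / Num.sqrt (mu * lamb) ^+ 2).
    by field; rewrite gt_eqF.
  by rewrite sQ sM.
set T := d0 ^+ 2 * Q / (mu * lamb).
have T0 : 0 <= T by apply: divr_ge0; [apply: mulr_ge0 => //; apply: sqr_ge0 | lra].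
have s2 : 0 <= sigma ^+ 2 by apply: sqr_ge0.
have h1 : sigma ^+ 2 * N2 ^+ 2 <= sigma ^+ 2 * (4 * T) by apply: ler_wpM2l.
have h2 : lamb * eps <= lam1 * eps by apply: ler_wpM2r.
have -> : 3 * sigma ^+ 2 * d0 ^+ 2 / (mu * lamb ^+ 2) * Q = 3 * (sigma ^+ 2 * T) / lamb.
  by rewrite /T; field; rewrite !gt_eqF.
rewrite ler_pdivlMr //.
have : 0 <= sigma ^+ 2 * T by apply: mulr_ge0.
nra.
Qed.

End Final.


Unset Implicit Arguments.

Theorem theorem2p9 (R : realType) (n : nat) (f g : 'rV[R]_n -> \bar R) (mu : R)
  (xs : 'rV[R]_n) (sigma lamb : R)
  (x y xt v : nat -> 'rV[R]_n) (lam eps A a : nat -> R) :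
  proper_fun f -> closed_fun f -> convex_fun f ->
  proper_fun g -> closed_fun g -> 0 < mu -> strongly_convex mu g ->
  (exists z, ((f z + g z) < +oo)%E) ->
  (forall z, (f xs + g xs <= f z + g z)%E) ->
  algorithm1 f g mu sigma x y xt v lam eps A a ->
  0 < lamb -> (forall k, (1 <= k)%N -> lamb <= lam k) ->
  let d0 := hnorm (xs - x 0%N) in
  let alpha := Num.sqrt (mu * lamb / (1 + mu * lamb)) in
  (0 < alpha < 1) /\
  (forall k : nat, (1 <= k)%N ->
     ((f (y k) + g (y k)) - (f xs + g xs) <=
        (d0 ^+ 2 / (2 * lamb) * (1 - alpha) ^+ (k - 1))%:E)%E /\
     Num.max (hnorm (xs - y k)) (hnorm (xs - x k)) <=
        d0 / Num.sqrt (mu * lamb) * Num.sqrt ((1 - alpha) ^+ (k - 1))) /\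
  (forall k : nat, (1 <= k)%N ->
     in_sum (eps_subdiff (eps k.+1) f (y k.+1)) (subdiff g (y k.+1)) (v k.+1) /\
     hnorm (v k.+1) <=
       Num.sqrt 6 * (1 + sigma * Num.sqrt (1 + mu * lamb))
         / (Num.sqrt mu * (lamb * Num.sqrt lamb))
         * d0 * Num.sqrt ((1 - alpha) ^+ (k - 1)) /\
     eps k.+1 <= 3 * sigma ^+ 2 * d0 ^+ 2 / (mu * lamb ^+ 2) * (1 - alpha) ^+ (k - 1)).
Proof.
move=> pf cf cvf pg cg m0 sc [z hz] hmin alg lb0 hlb d0 alpha.
case: alg => hs01 [A0 Hk].
have /andP[s0 s1] := hs01.
have alb : 0 < alpha < 1 by exact: alpha_bounds.
have mu0 : 0 <= mu by lra.
have hxs : (f xs + g xs < +oo)%E := le_lt_trans (hmin z) hz.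
have [efs egs] := fin_sum pf pg hxs.
set FS := fine (f xs) in efs *.
set GS := fine (g xs) in egs *.
have fy : forall k, f (y k.+1) = (fine (f (y k.+1)))%:E /\ g (y k.+1) = (fine (g (y k.+1)))%:E.
  by move=> k; have [_ [_ [_ [_ [hin _]]]]] := Hk k; exact: fin_y pf pg hin.
have apos : forall k, 0 < a k.+1.
  move=> k; have [lp [ha _]] := Hk k.
  have Ak0 : 0 <= A k.
    elim: k {lp ha} => [|k IH]; first by rewrite A0.
    have [lp' [ha' [_ [_ [_ [_ [hA _]]]]]]] := Hk k.
    have [ap _ _] := a_props IH lp' m0 ha'.
    rewrite hA; lra.
  by have [ap _ _] := a_props Ak0 lp m0 ha.
have Apos : forall k, 0 <= A k.
  elim => [|k IH]; first by rewrite A0.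
  have [_ [_ [_ [_ [_ [_ [hA _]]]]]]] := Hk k.
  by rewrite hA; have := apos k; lra.
have dd : d0 = hnorm (x 0%N - xs) by rewrite /d0 hnormB_sym.
have Phi : forall k, A k.+1 * (fine (f (y k.+1)) + fine (g (y k.+1)) - (FS + GS))
    + (1 + mu * A k.+1) / 2 * hnorm (x k.+1 - xs) ^+ 2 <= d0 ^+ 2 / 2.
  elim => [|k IH].
    have [lp [ha [hxt [e0 [hin [cond [hA hx]]]]]]] := Hk 0%N.
    rewrite hA in hx.
    have [efy egy] := fy 0%N.
    have L1 := lowbound sc mu0 hin efy egy efs egs.
    have L2 : A 0%N * (fine (f (y 1%N)) + fine (g (y 1%N)) + inner (v 1%N) (y 0%N - y 1%N)
       - eps 1%N + mu / 2 * hnorm (y 0%N - y 1%N) ^+ 2) <= A 0%N * 0.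
      by rewrite A0 !mul0r.
    have := step (Apos 0%N) lp m0 hs01 e0 ha hxt hx cond L1 L2.
    rewrite -hA A0 dd; lra.
  have [lp [ha [hxt [e0 [hin [cond [hA hx]]]]]]] := Hk k.+1.
  rewrite hA in hx.
  have [efy egy] := fy k.+1.
  have [efy' egy'] := fy k.
  have L1 := lowbound sc mu0 hin efy egy efs egs.
  have L2' := lowbound sc mu0 hin efy egy efy' egy'.
  have L2 := ler_wpM2l (Apos k.+1) L2'.
  have := step (Apos k.+1) lp m0 hs01 e0 ha hxt hx cond L1 L2.
  rewrite -hA; lra.
have al0 : 0 <= alpha by lra.
have al1 : 0 < 1 - alpha by lra.
have gr : forall j, lamb <= (1 - alpha) ^+ j * A j.+1.
  elim => [|j IH].
    have [lp [ha [_ [_ [_ [_ [hA _]]]]]]] := Hk 0%N.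
    have [_ h _] := a_props (Apos 0%N) lp m0 ha.
    rewrite expr0 mul1r hA; rewrite A0 in h *.
    have := hlb 1%N isT; lra.
  have [lp [ha [_ [_ [_ [_ [hA _]]]]]]] := Hk j.+1.
  have g1 := growth (Apos j.+1) lb0 (hlb j.+2 isT) m0 ha.
  rewrite -/alpha -hA in g1.
  have Q0 : 0 <= (1 - alpha) ^+ j by apply: exprn_ge0; lra.
  have := ler_wpM2l Q0 g1.
  rewrite exprS; lra.
have FA : forall j, [/\ fine (f (y j.+1)) + fine (g (y j.+1)) - (FS + GS)
                          <= d0 ^+ 2 / (2 * lamb) * (1 - alpha) ^+ j,
      hnorm (y j.+1 - xs) ^+ 2 * (mu * lamb) <= d0 ^+ 2 * (1 - alpha) ^+ j &
      hnorm (x j.+1 - xs) ^+ 2 * (mu * lamb) <= d0 ^+ 2 * (1 - alpha) ^+ j].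
  move=> j.
  have [efy egy] := fy j.
  have hg := h_growth cvf sc mu0 hmin efs egs efy egy.
  have Q0 : 0 < (1 - alpha) ^+ j by apply: exprn_gt0.
  have Ap : 0 < A j.+1.
    have [_ [_ [_ [_ [_ [_ [hA _]]]]]]] := Hk j.
    by rewrite hA; have := apos j; have := Apos j; lra.
  exact: final_a Ap lb0 Q0 m0 (gr j) (sqr_ge0 _) (sqr_ge0 _) (Phi j) hg.
have d00 : 0 <= d0 by apply: hnorm_ge0.
have ml : 0 < mu * lamb by apply: mulr_gt0.
split; first by [].
split.
  case=> [//|j] _.
  rewrite subn1 /=.
  have [fa1 fa2 fa3] := FA j.
  have Q0 : 0 <= (1 - alpha) ^+ j by apply: exprn_ge0; lra.
  split.
    have [efy egy] := fy j.
    by rewrite efy egy efs egs -!EFinD ?EFinB lee_fin.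
  rewrite ge_max; apply/andP; split; apply: bound_conv => //.
    by rewrite -hnorm_sq hnormB_sym.
  by rewrite -hnorm_sq hnormB_sym.
case=> [//|j] _.
rewrite subn1 /=.
have [lp [ha [hxt [e0 [hin [cond [hA hx]]]]]]] := Hk j.+1.
split; first by [].
have Q0 : 0 <= (1 - alpha) ^+ j by apply: exprn_ge0; lra.
set Q := (1 - alpha) ^+ j in Q0 *.
set D := d0 / Num.sqrt (mu * lamb) * Num.sqrt Q.
have [_ fy2 fx2] := FA j.
have [_ fy2' _] := FA j.+1.
have Dx : hnorm (x j.+1 - xs) <= D by apply: bound_conv => //; rewrite -hnorm_sq.
have Dy : hnorm (y j.+1 - xs) <= D by apply: bound_conv => //; rewrite -hnorm_sq.
have Dy2 : hnorm (y j.+2 - xs) <= D.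
  apply: bound_conv => //; rewrite -hnorm_sq; apply: (le_trans fy2').
  apply: ler_wpM2l; first by apply: sqr_ge0.
  rewrite exprS -/Q; have := mulr_ge0 al0 Q0; lra.
set Aj := A j.+1 in hxt ha.
set aj := a j.+2 in hxt ha.
set lj := lam j.+2 in hxt ha cond lp.
have Ajp := Apos j.+1; rewrite -/Aj in Ajp.
have [ap ab _] := a_props Ajp lp m0 ha.
have muAl : 0 <= mu * Aj * lj by apply: mulr_ge0; [apply: mulr_ge0 => //|]; lra.
have c1p : 0 <= (aj - mu * Aj * lj) / (Aj + aj) by apply: divr_ge0; lra.
have c2p : 0 <= (Aj + mu * Aj * lj) / (Aj + aj) by apply: divr_ge0; lra.
have c12 : (aj - mu * Aj * lj) / (Aj + aj) + (Aj + mu * Aj * lj) / (Aj + aj) = 1.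
  by field; rewrite gt_eqF //; lra.
have Dxt : hnorm (xt j.+1 - xs) <= D.
  rewrite hxt comb_sub //.
  apply: (le_trans (hnorm_triangle _ _)).
  rewrite !hnormZ !ger0_norm //.
  have := ler_wpM2l c1p Dx; have := ler_wpM2l c2p Dy.
  have : (aj - mu * Aj * lj) / (Aj + aj) * D + (Aj + mu * Aj * lj) / (Aj + aj) * D = D.
    by rewrite -mulrDl c12 mul1r.
  lra.
set N2 := hnorm (y j.+2 - xt j.+1).
have hN : N2 <= 2 * D.
  rewrite /N2 (split_sub _ _ xs).
  apply: (le_trans (hnorm_triangle _ _)).
  rewrite (hnormB_sym xs); lra.
have N20 : 0 <= N2 by apply: hnorm_ge0.
have lj0 : 0 < lj by [].
have L0 : 0 < 1 + lj * mu by have := mulr_gt0 lj0 m0; lra.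
set Nr := hnorm (lj *: v j.+2 + y j.+2 - xt j.+1) in cond.
rewrite -/N2 in cond.
have X0 : 0 <= Nr ^+ 2 / (1 + lj * mu) by apply: divr_ge0; [apply: sqr_ge0|lra].
have lbl : lamb <= lj by apply: hlb.
split; last first.
  exact: final_eps lb0 lbl m0 d00 Q0 e0 X0 cond N20 hN.
have hNr : Nr <= sigma * Num.sqrt (1 + lj * mu) * N2.
  apply: sq_le.
    by apply: mulr_ge0; [apply: mulr_ge0 => //; apply: sqrtr_ge0|].
  rewrite !exprMn (@sqr_sqrtr _ (1 + lj * mu)); last by lra.
  have : Nr ^+ 2 / (1 + lj * mu) <= sigma ^+ 2 * N2 ^+ 2.
    have : 0 <= 2 * lj * eps j.+2 by apply: mulr_ge0; lra.
    lra.
  rewrite ler_pdivrMr //; lra.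
have hlv : lj * hnorm (v j.+2) <= sigma * Num.sqrt (1 + lj * mu) * N2 + N2.
  have -> : lj * hnorm (v j.+2) = hnorm (lj *: v j.+2) by rewrite hnormZ ger0_norm //; lra.
  have -> : lj *: v j.+2 = (lj *: v j.+2 + y j.+2 - xt j.+1) - (y j.+2 - xt j.+1).
    by apply/rowP => i; rewrite !mxE; ring.
  apply: (le_trans (hnorm_triangleB _ _)).
  rewrite -/Nr -/N2; lra.
exact: final_v lb0 lbl s0 m0 d00 Q0 (hnorm_ge0 _) hlv hN.
Qed.
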